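(* For every $m\in\mathbb N$ there exist $L_3(m)\in\mathbb N$ and $K_3(m)\in\mathbb N$ such that whenever $\varepsilon_1,\dots,\varepsilon_m\in\{\pm1\}$ and $i_1,\dots,i_m>K_3(m)$ are integers, then either $$\varepsilon_1a_{i_1}+\dots+\varepsilon_ma_{i_m}=\varepsilon_1\eta^{i_1}+\dots+\varepsilon_m\eta^{i_m}=0,$$ or $$|\varepsilon_1a_{i_1}+\dots+\varepsilon_ma_{i_m}|\ge\eta^{\min\{i_1,\dots,i_m\}-L_3(m)}.$$ Moreover, $L_3(m)$ and $K_3(m)$ can be chosen to be increasing in $m$.
   Context: Standing setting: $d\in\mathbb N$; $\lambda_1,\dots,\lambda_d\in\mathbb C$ are the roots of an irreducible polynomial of degree $d$ with integer coefficients; $c_1,\dots,c_d\in\mathbb C$; the dominant root condition holds: $\lambda_1$ is real, $\lambda_1>1$, $\lambda_1>\max\{|\lambda_2|,\dots,|\lambda_d|\}$, $c_1\ne0$; $a_n=c_1\lambda_1^n+\dots+c_d\lambda_d^n$ is a positive integer for every $n\in\mathbb N$; and $\eta:=\lambda_1$. *)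

(* Defs.v *)
From mathcomp Require Import all_boot all_order all_algebra.
From mathcomp Require Import reals complex.
Set Implicit Arguments. Unset Strict Implicit. Unset Printing Implicit Defensive.
Import Order.TTheory GRing.Theory Num.Theory.
Local Open Scope ring_scope.

(* a_k = c_1 lam_1^k + ... + c_n lam_n^k (indices shifted to 0 .. n-1). *)
Definition lrs (R : realType) (n : nat) (c lam : 'I_n -> R[i]) (k : nat) : R[i] :=
  \sum_(j < n) c j * lam j ^+ k.

(* min{i_1,...,i_m} (for m = 0 this is 0; irrelevant for the statement). *)
Definition min_idx (m : nat) (i : 'I_m -> nat) : nat :=
  \big[minn/(\max_(j < m) i j)%N]_(j < m) i j.

(* Main.v *)
Require Import Defs.
From mathcomp Require Import all_boot all_order all_algebra.
From mathcomp Require Import reals complex.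
From mathcomp Require Import zify ring lra.
From Stdlib Require Import IndefiniteDescription.
Import Order.TTheory GRing.Theory Num.Theory.
Local Open Scope ring_scope.


Section NcSec.
Local Set Implicit Arguments.
Local Open Scope complex_scope.


Section Nc.
Variable R : realType.
Definition nc (x : R[i]) : R := Normc.normc x.
Lemma ncE x : `|x| = (nc x)%:C. Proof. by []. Qed.
Lemma nc_ge0 x : 0 <= nc x.
Proof. by have := normr_ge0 x; rewrite ncE lecE /= eqxx. Qed.
Lemma ncD x y : nc (x + y) <= nc x + nc y.
Proof. by have := ler_normD x y; rewrite !ncE lecE /= addr0 eqxx. Qed.
Lemma ncM x y : nc (x * y) = nc x * nc y.
Proof. by have := normrM x y; rewrite !ncE -rmorphM => /complexI. Qed.
Lemma ncX x n : nc (x ^+ n) = nc x ^+ n.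
Proof. by have := normrX n x; rewrite !ncE -rmorphXn => /complexI. Qed.
Lemma ncN x : nc (- x) = nc x.
Proof. by have := normrN x; rewrite !ncE => /complexI. Qed.
Lemma ncB x y : nc x - nc y <= nc (x + y).
Proof. have := ncD (x + y) (- y). rewrite ncN addrK. lra. Qed.
Lemma ncR (r : R) : nc (r%:C) = `|r|.
Proof. by rewrite /nc /Normc.normc /= expr0n /= addr0 sqrtr_sqr. Qed.
Lemma nc_int (z : int) : nc (z%:~R) = `|z%:~R : R|.
Proof. by rewrite -(rmorph_int (real_complex R)) ncR. Qed.
Lemma nc_sum (I : finType) (P : pred I) (F : I -> R[i]) :
  nc (\sum_(j | P j) F j) <= \sum_(j | P j) nc (F j).
Proof.
have := ler_norm_sum (index_enum I) F P. rewrite ncE.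
have -> : \sum_(j | P j) `|F j| = (\sum_(j | P j) nc (F j))%:C.
  by rewrite rmorph_sum.
by rewrite lecE /= eqxx.
Qed.
End Nc.

End NcSec.
Arguments nc {R}.
Arguments ncE {R}.
Arguments nc_ge0 {R}.
Arguments ncD {R}.
Arguments ncM {R}.
Arguments ncX {R}.
Arguments ncN {R}.
Arguments ncB {R}.
Arguments ncR {R}.
Arguments nc_int {R}.
Arguments nc_sum {R I}.
Section IrrSec.
Local Open Scope complex_scope.

Lemma irr_transfer (R : realType) (d : nat) (lam : 'I_d.+1 -> R[i])
  (p : {poly int})
  (Hirr : irreducible_poly (map_poly (fun z : int => z%:~R : rat) p))
  (Hroots : map_poly (fun z : int => z%:~R : R[i]) p
            = (lead_coef p)%:~R *: \prod_(j < d.+1) ('X - (lam j)%:P))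
  (q : {poly int}) :
  root (map_poly (fun z : int => z%:~R : R[i]) q) (lam ord0) ->
  forall l, root (map_poly (fun z : int => z%:~R : R[i]) q) (lam l).
Proof.
move=> rq l.
set pQ := map_poly (fun z : int => z%:~R : rat) p.
set qQ := map_poly (fun z : int => z%:~R : rat) q.
have mapC r : map_poly (ratr : rat -> R[i]) (map_poly (fun z : int => z%:~R : rat) r)
   = map_poly (fun z : int => z%:~R : R[i]) r.
  by rewrite -map_poly_comp; apply: eq_map_poly => z /=; rewrite ratr_int.
have rootp l' : root (map_poly (fun z : int => z%:~R : R[i]) p) (lam l').
  rewrite /root Hroots hornerZ horner_prod (bigD1 l') //= hornerXsubC subrr.
  by rewrite mul0r mulr0.
set g := gcdp pQ qQ.
have rg : root (map_poly (ratr : rat -> R[i]) g) (lam ord0).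
  by rewrite gcdp_map root_gcd !mapC rootp rq.
have sg : size g != 1%N.
  apply/negP => /size_poly1P [c c0 gE].
  move: rg; rewrite gE map_polyC /root hornerC.
  by rewrite fmorph_eq0 (negbTE c0).
have gp : g %= pQ by apply: (apply_irredp Hirr sg); apply: dvdp_gcdl.
have pq : pQ %| qQ by rewrite -(eqp_dvdl _ gp) dvdp_gcdr.
have := pq; rewrite -(dvdp_map (ratr : {rmorphism rat -> R[i]})) !mapC => pqC.
exact: (root_dvdp pqC).
Qed.

End IrrSec.

Section Gen.
Local Set Implicit Arguments.
Variable R : realType.

Lemma bernoulli (x : R) (n : nat) : 1 <= x -> 1 + n%:R * (x - 1) <= x ^+ n.
Proof.
move=> x1; elim: n => [|n IH]; first by rewrite mul0r addr0 expr0.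
rewrite exprS -natr1.
have h0 : 0 <= n%:R :> R by rewrite ler0n.
set y := x ^+ n in IH *.
have h1 : 0 <= (x - 1) * (y - (1 + n%:R * (x - 1))) by rewrite mulr_ge0 // ?subr_ge0.
have h2 : 0 <= n%:R * ((x - 1) * (x - 1)) by rewrite mulr_ge0 // mulr_ge0 // subr_ge0.
nra.
Qed.

Lemma pow_unbounded (x X : R) : 1 < x -> exists n, X <= x ^+ n.
Proof.
move=> x1.
have xp : 0 < x - 1 by rewrite subr_gt0.
have := @archi_boundP R (`|X| / (x - 1)).
rewrite divr_ge0 ?normr_ge0 ?ltW // => /(_ isT).
set n := Num.Def.archi_bound _ => hn.
exists n.
have := @bernoulli x n (ltW x1).
rewrite ltr_pdivrMr // in hn.
have := ler_norm X. lra.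
Qed.

Lemma decay (r x X Y : R) : 0 < r -> r < x -> 0 < Y ->
  exists N, forall h, (N <= h)%N -> X * r ^+ h <= Y * x ^+ h.
Proof.
move=> r0 rx Y0.
have x0 : 0 < x by apply: lt_trans rx.
have xr1 : 1 < x / r by rewrite ltr_pdivlMr // mul1r.
have [N hN] := @pow_unbounded (x / r) (X / Y) xr1.
have base : X * r ^+ N <= Y * x ^+ N.
  rewrite expr_div_n ler_pdivrMr // mulrAC ler_pdivlMr ?exprn_gt0 // in hN.
  by rewrite (mulrC Y).
exists N => h /subnK <-.
elim: (h - N)%N => [|k IH]; first by rewrite add0n.
rewrite addSn !exprS.
have e1 : 0 <= x ^+ (k + N) by rewrite exprn_ge0 ?ltW.
have e2 : 0 <= r ^+ (k + N) by rewrite exprn_ge0 ?ltW.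
have : r * (Y * x ^+ (k + N)) <= x * (Y * x ^+ (k + N)).
  by rewrite ler_pM2r ?ltW // mulr_gt0 // exprn_gt0.
have : r * (X * r ^+ (k + N)) <= r * (Y * x ^+ (k + N)).
  by rewrite ler_pM2l.
rewrite !mulrA (mulrC X) (mulrC Y) (mulrC x Y) -!mulrA.
lra.
Qed.

Lemma fin_max (P : nat -> nat -> Prop) :
  (forall t N N', (N <= N')%N -> P t N -> P t N') ->
  (forall t, exists N, P t N) -> forall M, exists N, forall t, (t <= M)%N -> P t N.
Proof.
move=> mono ex; elim=> [|M [N HN]].
  have [N HN] := ex 0%N; exists N => t; rewrite leqn0 => /eqP ->; exact HN.
have [N' HN'] := ex M.+1; exists (maxn N N') => t; rewrite leq_eqVlt => /orP[/eqP->|].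
  by apply: mono HN'; rewrite leq_maxr.
rewrite ltnS => tM; apply: mono (HN t tM); by rewrite leq_maxl.
Qed.

Definition lbF (F : finType) (v : F -> R) : R := (1 + \sum_x `|v x|^-1)^-1.
Arguments lbF {F}.

Lemma lbF_gt0 (F : finType) (v : F -> R) : 0 < lbF v.
Proof.
rewrite /lbF invr_gt0.
have : 0 <= \sum_x `|v x|^-1 by apply: sumr_ge0 => x _; rewrite invr_ge0.
lra.
Qed.

Lemma lbF_le (F : finType) (v : F -> R) x : v x != 0 -> lbF v <= `|v x|.
Proof.
move=> vx.
have s0 : 0 <= \sum_(y | y != x) `|v y|^-1 by apply: sumr_ge0 => y _; rewrite invr_ge0.
have hs : `|v x|^-1 <= 1 + \sum_y `|v y|^-1.
  by rewrite (bigD1 x) //= addrCA lerDl addr_ge0.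
have p0 : 0 < 1 + \sum_y `|v y|^-1.
  have : 0 <= \sum_y `|v y|^-1 by apply: sumr_ge0 => y _; rewrite invr_ge0.
  lra.
have n0 : 0 < `|v x| by rewrite normr_gt0.
rewrite /lbF -div1r ler_pdivrMr //.
have := ler_wpM2l (ltW n0) hs.
by rewrite divff ?normr_eq0.
Qed.
End Gen.

Arguments lbF {R F}.
Arguments bernoulli {R}.
Arguments pow_unbounded {R}.
Arguments decay {R}.
Arguments lbF_gt0 {R F}.
Arguments lbF_le {R F}.

Section PigSec.
Local Open Scope nat_scope.
Lemma pigeon m (Z : {set 'I_m}) (f : 'I_m -> nat) (G : nat -> nat) (h n : nat) :
  (forall t, G t <= G t.+1) -> #|Z| < n ->
  exists2 t, t < n & forall j, j \in Z -> ~~ ((h - G t.+1 <= f j) && (f j < h - G t)).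
Proof.
move=> Gmono Zn.
have key : forall s, (forall t, t < s -> exists2 j, j \in Z & (h - G t.+1 <= f j) && (f j < h - G t)) ->
    s <= #|[set j in Z | h - G s <= f j]|.
  elim=> [|s IH] hyp; first done.
  have [j jZ /andP[j1 j2]] := hyp s (ltnSn s).
  have := IH (fun t ts => hyp t (ltnW ts)) => hs.
  have jn : j \notin [set j in Z | h - G s <= f j].
    by rewrite inE negb_and -ltnNge j2 orbT.
  have sub : j |: [set j in Z | h - G s <= f j] \subset [set j in Z | h - G s.+1 <= f j].
    apply/subsetP => k; rewrite !inE => /orP[/eqP->|/andP[kZ kf]]; first by rewrite jZ j1.
    rewrite kZ /=; apply: leq_trans kf; exact: leq_sub2l.
  have := subset_leq_card sub; rewrite cardsU1 jn add1n; exact: leq_trans.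
case: (boolP [exists t : 'I_n, [forall j in Z, ~~ ((h - G t.+1 <= f j) && (f j < h - G t))]]).
  case/existsP => t /forallP H; exists t => // j jZ.
  by have := H j; rewrite jZ.
rewrite negb_exists => /forallP H.
have : n <= #|[set j in Z | h - G n <= f j]|.
  apply: key => t tn; have := H (Ordinal tn); rewrite negb_forall => /existsP[j].
  rewrite negb_imply negbK => /andP[jZ Q]; by exists j.
move=> nle; have : #|[set j in Z | h - G n <= f j]| <= #|Z|.
  by apply: subset_leq_card; apply/subsetP => k; rewrite inE => /andP[].
move=> le2; have := leq_trans nle le2; rewrite leqNgt Zn //.
Qed.
End PigSec.


Section Main.
Local Open Scope complex_scope.
Variable R : realType.
Variables (d : nat) (c lam : 'I_d.+1 -> R[i]) (p : {poly int}).
Hypothesis Hirr : irreducible_poly (map_poly (fun z : int => z%:~R : rat) p).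
Hypothesis Hroots : map_poly (fun z : int => z%:~R : R[i]) p
            = (lead_coef p)%:~R *: \prod_(j < d.+1) ('X - (lam j)%:P).
Hypothesis Hreal : complex.Im (lam ord0) = 0.
Hypothesis Heta1 : 1 < complex.Re (lam ord0).
Hypothesis Hdom : forall j : 'I_d.+1, j != ord0 -> `|lam j| < Complex (complex.Re (lam ord0)) 0.
Hypothesis Hc1 : c ord0 != 0.

Local Notation eta := (complex.Re (lam ord0)).
Local Notation a := (lrs c lam).

Lemma lam0E : lam ord0 = eta%:C.
Proof. by move: Hreal; case: (lam ord0) => x y /= ->. Qed.

Lemma eta_gt0 : 0 < eta. Proof. by apply: lt_trans Heta1. Qed.
Lemma eta_ge1 : 1 <= eta. Proof. exact: ltW. Qed.

Definition Sa m (e : 'I_m -> int) (i : 'I_m -> nat) (P : pred 'I_m) : R[i] :=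
  \sum_(j < m | P j) (e j)%:~R * a (i j).
Definition Te m (e : 'I_m -> int) (i : 'I_m -> nat) (P : pred 'I_m) : R :=
  \sum_(j < m | P j) (e j)%:~R * eta ^+ i j.

Lemma zero_transfer m e i P : Te m e i P = 0 -> Sa m e i P = 0.
Proof.
move=> T0.
pose q : {poly int} := \sum_(j < m | P j) (e j)%:P * 'X^(i j).
have ev x : (map_poly (fun z : int => z%:~R : R[i]) q).[x]
    = \sum_(j < m | P j) (e j)%:~R * x ^+ i j.
  rewrite rmorph_sum horner_sum; apply: eq_bigr => j _.
  by rewrite rmorphM /= map_polyC map_polyXn hornerCM hornerXn.
have r0 : root (map_poly (fun z : int => z%:~R : R[i]) q) (lam ord0).
  rewrite /root ev lam0E; apply/eqP.
  transitivity ((Te m e i P)%:C); last by rewrite T0.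
  rewrite /Te rmorph_sum; apply: eq_bigr => j _.
  by rewrite rmorphM rmorphXn rmorph_int.
have rl := @irr_transfer R d lam p Hirr Hroots q r0.
rewrite /Sa /lrs.
under eq_bigr do rewrite mulr_sumr.
rewrite exchange_big /=; apply: big1 => l _.
transitivity (c l * (map_poly (fun z : int => z%:~R : R[i]) q).[lam l]);
  last by rewrite (eqP (rl l)) mulr0.
rewrite ev mulr_sumr.
by apply: eq_bigr => j _; rewrite mulrCA.
Qed.

Definition rr n : R[i] := \sum_(l < d.+1 | l != ord0) c l * lam l ^+ n.
Lemma aE n : a n = c ord0 * (eta ^+ n)%:C + rr n.
Proof. by rewrite /lrs (bigD1 ord0) //= lam0E rmorphXn. Qed.

Definition c0n := nc (c ord0).
Lemma c0n_gt0 : 0 < c0n.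
Proof. by have := normr_gt0 (c ord0); rewrite Hc1 ncE ltcE /= => /andP[_]. Qed.

Definition A := \sum_l nc (c l).
Definition B := \sum_(l | l != ord0) nc (c l).
Lemma A_ge0 : 0 <= A. Proof. by apply: sumr_ge0 => l _; apply: nc_ge0. Qed.
Lemma B_ge0 : 0 <= B. Proof. by apply: sumr_ge0 => l _; apply: nc_ge0. Qed.

Lemma nc_lam_lt l : l != ord0 -> nc (lam l) < eta.
Proof. by move=> /Hdom; rewrite ncE ltcE /= => /andP[_]. Qed.

Lemma nc_lam l : nc (lam l) <= eta.
Proof.
case: (eqVneq l ord0) => [->|/nc_lam_lt/ltW //].
by rewrite lam0E ncR ger0_norm // ltW // eta_gt0.
Qed.

Lemma powle (x y : R) n : 0 <= x -> x <= y -> x ^+ n <= y ^+ n.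
Proof. by move=> x0 xy; apply: lerXn2r; rewrite ?nnegrE //; apply: le_trans xy. Qed.

Lemma a_bound n : nc (a n) <= A * eta ^+ n.
Proof.
rewrite /lrs; apply: le_trans (nc_sum _ _) _; rewrite /A mulr_suml.
apply: ler_sum => l _; rewrite ncM ncX.
apply: ler_pM; rewrite ?nc_ge0 ?exprn_ge0 ?nc_ge0 //.
by apply: powle; rewrite ?nc_ge0 ?nc_lam.
Qed.

Lemma rho_ex : exists2 rho : R, (1 <= rho) && (rho < eta) &
   forall l, l != ord0 -> nc (lam l) <= rho.
Proof.
suff : forall s : seq 'I_d.+1, exists2 rho : R, (1 <= rho) && (rho < eta) &
   forall l, l \in s -> l != ord0 -> nc (lam l) <= rho.
  by case/(_ (enum 'I_d.+1)) => rho h1 h2; exists rho => // l; apply: h2; rewrite mem_enum.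
elim=> [|l s [rho /andP[r1 r2] IH]].
  by exists 1 => //; rewrite lexx Heta1.
case: (eqVneq l ord0) => [l0|ln0].
  exists rho; first by rewrite r1 r2.
  move=> l'; rewrite inE => /orP[/eqP->|]; first by rewrite l0 eqxx.
  exact: IH.
exists (Num.max rho (nc (lam l))).
  by rewrite le_max r1 /= gt_max r2 nc_lam_lt.
move=> l'; rewrite inE => /orP[/eqP->|l's l'0]; first by rewrite le_max lexx orbT.
by rewrite le_max IH.
Qed.

Lemma rr_bound rho n : 1 <= rho -> (forall l, l != ord0 -> nc (lam l) <= rho) ->
  nc (rr n) <= B * rho ^+ n.
Proof.
move=> r1 hr.
rewrite /rr; apply: le_trans (nc_sum _ _) _; rewrite /B mulr_suml.
apply: ler_sum => l l0; rewrite ncM ncX.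
apply: ler_pM; rewrite ?nc_ge0 ?exprn_ge0 ?nc_ge0 //.
by apply: powle; rewrite ?nc_ge0 ?hr.
Qed.


Lemma nc0 : nc (0 : R[i]) = 0.
Proof. by rewrite -(rmorph0 (real_complex R)) ncR normr0. Qed.

Definition okE (e : int) : bool := (e == 0) || (e == 1) || (e == -1).

Lemma okE_nc e : okE e -> nc ((e%:~R) : R[i]) <= 1.
Proof.
by rewrite nc_int /okE => /orP[/orP[]|] /eqP ->; rewrite ?normr0 ?normr1 ?normrN1 ?ler01.
Qed.

Definition code (k : 'I_3) : int :=
  if nat_of_ord k == 1%N then 1 else if nat_of_ord k == 2%N then -1 else 0.
Definition enc (e : int) : 'I_3 :=
  if e == 1 then inord 1 else if e == -1 then inord 2 else ord0.
Lemma encK e : okE e -> code (enc e) = e.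
Proof.
rewrite /okE /enc /code => /orP[/orP[]|] /eqP ->.
- by [].
- by rewrite eqxx inordK.
- by rewrite inordK.
Qed.

Definition Vg m G (g : {ffun 'I_m -> 'I_3 * 'I_G.+1}) : R :=
  \sum_j (code (g j).1)%:~R * eta ^+ (g j).2.
Definition delta m G : R := lbF (Vg m G).

Lemma Vg_ex m G (e : 'I_m -> int) (H : pred 'I_m) (t : 'I_m -> nat) :
  (forall j, okE (e j)) -> (forall j, H j -> e j != 0 -> (t j <= G)%N) ->
  exists g, Vg m G g = \sum_(j | H j) (e j)%:~R * eta ^+ t j.
Proof.
move=> ok ht.
exists [ffun j => (enc (if H j then e j else 0), inord (t j) : 'I_G.+1)].
rewrite /Vg [RHS]big_mkcond /=; apply: eq_bigr => j _; rewrite ffunE /=.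
case Hj: (H j); last by rewrite /enc /code /= mul0r.
rewrite encK //.
case: (eqVneq (e j) 0) => [->|ej]; first by rewrite !mul0r.
by rewrite inordK // ltnS ht.
Qed.

Definition Dpred m G : pred nat :=
  fun n => 4 * m%:R * A <= c0n * delta m G * eta ^+ n.
Lemma Dex m G : exists n, Dpred m G n.
Proof.
have pos : 0 < c0n * delta m G by rewrite mulr_gt0 ?c0n_gt0 ?lbF_gt0.
have [n hn] := pow_unbounded eta (4 * m%:R * A / (c0n * delta m G)) Heta1.
exists n; rewrite /Dpred -ler_pdivrMl // mulrC; exact: hn.
Qed.
Definition D m G := xchoose (Dex m G).
Lemma DP m G : 4 * m%:R * A <= c0n * delta m G * eta ^+ (D m G).
Proof. exact: (xchooseP (Dex m G)). Qed.

Fixpoint Gs m t := if t is t'.+1 then (Gs m t' + D m (Gs m t'))%N else 0%N.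
Lemma Gs_mono m t t' : (t <= t')%N -> (Gs m t <= Gs m t')%N.
Proof.
apply: (homo_leq (r := leq)) => //; first exact: leq_trans.
by move=> k /=; rewrite leq_addr.
Qed.

Lemma split_S m e i (H : pred 'I_m) :
  Sa m e i predT = Sa m e i H + Sa m (fun j => if H j then 0 else e j) i predT.
Proof.
rewrite /Sa (bigID H) /=; congr (_ + _).
rewrite big_mkcond /=; apply: eq_bigr => j _.
by case: (H j); rewrite /= ?mul0r.
Qed.

Lemma split_T m e i (H : pred 'I_m) :
  Te m e i predT = Te m e i H + Te m (fun j => if H j then 0 else e j) i predT.
Proof.
rewrite /Te (bigID H) /=; congr (_ + _).
rewrite big_mkcond /=; apply: eq_bigr => j _.
by case: (H j); rewrite /= ?mul0r.
Qed.

Lemma upper m e i u : (forall j, okE (e j)) -> (forall j, e j != 0 -> (i j <= u)%N) ->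
  nc (Sa m e i predT) <= m%:R * (A * eta ^+ u).
Proof.
move=> ok hu.
apply: le_trans (nc_sum _ _) _.
apply: (@le_trans _ _ (\sum_(j < m) (A * eta ^+ u))).
  apply: ler_sum => j _.
  case: (eqVneq (e j) 0) => [->|ej].
    by rewrite mulr0z mul0r nc0 mulr_ge0 ?A_ge0 ?exprn_ge0 ?ltW ?eta_gt0.
  rewrite ncM -[A * _]mul1r.
  apply: ler_pM; rewrite ?nc_ge0 ?okE_nc //.
  apply: le_trans (a_bound _) _.
  apply: ler_wpM2l; first exact: A_ge0.
  by apply: ler_weXn2l; [exact: eta_ge1 | exact: hu].
by rewrite sumr_const card_ord mulr_natl.
Qed.

Lemma lower m e i (H : pred 'I_m) h rho : 1 <= rho ->
  (forall l, l != ord0 -> nc (lam l) <= rho) ->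
  (forall j, okE (e j)) -> (forall j, H j -> e j != 0 -> (i j <= h)%N) ->
  c0n * `|Te m e i H| - m%:R * (B * rho ^+ h) <= nc (Sa m e i H).
Proof.
move=> r1 hr ok hh.
have -> : Sa m e i H = c ord0 * (Te m e i H)%:C + \sum_(j < m | H j) (e j)%:~R * rr (i j).
  rewrite /Sa; under eq_bigr do rewrite aE mulrDr.
  rewrite big_split /=; congr (_ + _).
  rewrite /Te rmorph_sum mulr_sumr; apply: eq_bigr => j _.
  by rewrite rmorphM rmorph_int mulrCA.
apply: le_trans (ncB _ _).
rewrite ncM ncR -/c0n lerD2l lerN2.
apply: le_trans (nc_sum _ _) _.
apply: (@le_trans _ _ (\sum_(j < m) (B * rho ^+ h))); last first.
  by rewrite sumr_const card_ord mulr_natl.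
rewrite [X in X <= _]big_mkcond /=.
apply: ler_sum => j _.
have Bp : 0 <= B * rho ^+ h by rewrite mulr_ge0 ?B_ge0 // exprn_ge0 // (le_trans ler01).
case Hj: (H j) => //.
case: (eqVneq (e j) 0) => [->|ej]; first by rewrite mulr0z mul0r nc0.
rewrite ncM -[B * _]mul1r.
apply: ler_pM; rewrite ?nc_ge0 ?okE_nc //.
apply: le_trans (rr_bound _ _ r1 hr) _.
apply: ler_pM => //; first exact: B_ge0.
  by apply: exprn_ge0; exact: le_trans ler01 r1.
exact: ler_weXn2l r1 _ _ (hh j Hj ej).
Qed.

Lemma num1 (cdX Q P VX s sH sL : R) : 4 * Q <= cdX -> 4 * P <= cdX -> cdX <= VX ->
  VX - Q <= sH -> sL <= P -> sH - sL <= s -> cdX <= 2 * s.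
Proof. move=> *; lra. Qed.
Lemma num2 (x y w : R) : 4 * x <= y -> y <= 2 * w -> 2 * x <= w.
Proof. move=> *; lra. Qed.
Lemma num3 (a1 b1 c1 d1 : R) : a1 <= b1 -> b1 <= c1 -> 0 <= c1 -> 2 * c1 <= d1 -> a1 <= d1.
Proof. move=> *; lra. Qed.

Lemma allzero m e i : (forall j, e j = 0) -> Sa m e i predT = 0 /\ Te m e i predT = 0.
Proof. by move=> H; split; apply: big1 => j _; rewrite H mulr0z mul0r. Qed.

Lemma core m : exists L K : nat, forall e i n0, (forall j, okE (e j)) ->
  (forall j, e j != 0 -> (K < i j)%N /\ (n0 <= i j)%N) ->
  (Sa m e i predT = 0 /\ Te m e i predT = 0) \/
  eta ^+ n0 <= nc (Sa m e i predT) * eta ^+ L.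
Proof.
have [rho /andP[r1 r2] hr] := rho_ex.
have r0 : 0 < rho by apply: lt_le_trans ltr01 r1.
pose G := Gs m.
have dpos t : 0 < c0n * delta m (G t) by rewrite mulr_gt0 ?c0n_gt0 ?lbF_gt0.
have [K1 HK1] : exists K1, forall t, (t <= m)%N -> forall h, (K1 <= h)%N ->
    (4 * m%:R * B * eta ^+ G t) * rho ^+ h <= (c0n * delta m (G t)) * eta ^+ h.
  apply: (@fin_max (fun t N => forall h, (N <= h)%N ->
     (4 * m%:R * B * eta ^+ G t) * rho ^+ h <= (c0n * delta m (G t)) * eta ^+ h)).
    by move=> t N N' NN' HN h hN; apply: HN; apply: leq_trans hN.
  by move=> t; apply: decay r0 r2 (dpos t).
have [L0 HL0] : exists L0, forall t, (t <= m)%N -> 4 <= c0n * delta m (G t) * eta ^+ L0.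
  apply: (@fin_max (fun t L => 4 <= c0n * delta m (G t) * eta ^+ L)).
    move=> t N N' NN' HN; apply: le_trans HN _; apply: ler_pM => //.
    - exact: ltW (dpos t).
    - by apply: exprn_ge0; apply: ltW eta_gt0.
    - exact: ler_weXn2l eta_ge1 _ _ NN'.
  move=> t; have [n hn] := pow_unbounded eta (4 / (c0n * delta m (G t))) Heta1.
  by exists n; rewrite -ler_pdivrMl // mulrC.
exists (L0 + G m)%N, (maxn K1 (G m)).
suff main : forall k (e : 'I_m -> int) (i : 'I_m -> nat) (n0 : nat), (#|[set j | e j != 0]| <= k)%N -> (forall j, okE (e j)) ->
  (forall j, e j != 0 -> (maxn K1 (G m) < i j)%N /\ (n0 <= i j)%N) ->
  (Sa m e i predT = 0 /\ Te m e i predT = 0) \/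
  eta ^+ n0 <= nc (Sa m e i predT) * eta ^+ (L0 + G m).
  move=> e i n0 ok cond; apply: (main m) => //.
  by apply: leq_trans (max_card _) _; rewrite card_ord.
elim=> [|k IH] e i n0 card ok cond.
  left; apply: allzero => j; apply/eqP; apply/negPn/negP => ej.
  move: card; rewrite leqn0 cards_eq0 => /eqP S0.
  have : j \in [set j | e j != 0] by rewrite inE.
  by rewrite S0 inE.
set Nz := [set j | e j != 0].
case: (eqVneq #|Nz| 0%N) => [N0|Npos].
  left; apply: allzero => j; apply/eqP; apply/negPn/negP => ej.
  move/eqP: N0; rewrite cards_eq0 => /eqP S0.
  have : j \in Nz by rewrite inE.
  by rewrite S0 inE.
have Np : (0 < #|Nz|)%N by rewrite lt0n.
have [js jsN hdef] := eq_bigmax_cond (fun j => i j) Np.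
set h := i js.
have hmax : forall j, e j != 0 -> (i j <= h)%N.
  by move=> j ej; rewrite /h -hdef; apply: leq_bigmax_cond; rewrite inE.
have ejs : e js != 0 by move: jsN; rewrite inE.
have [Ks n0h] := cond js ejs.
set Z := [set j | (e j != 0) && (i j < h)%N].
have ZN : (#|Z| < #|Nz|)%N.
  apply: proper_card; rewrite properE; apply/andP; split.
    by apply/subsetP => j; rewrite !inE => /andP[].
  by apply/negP => /subsetP /(_ js jsN); rewrite inE ltnn andbF.
have Gmono : forall t, (G t <= G t.+1)%N by move=> t; apply: Gs_mono.
have [t tN hZ] := @pigeon m Z i G h _ Gmono ZN.
have tm : (t.+1 <= m)%N.
  by apply: leq_trans tN _; apply: leq_trans (max_card _) _; rewrite card_ord.
have GtG : (G t.+1 <= G m)%N by apply: Gs_mono.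
have Kh : (maxn K1 (G m) < h)%N by [].
have K1h : (K1 <= h)%N by move: Kh; rewrite gtn_max => /andP[/ltnW].
have Gmh : (G m < h)%N by move: Kh; rewrite gtn_max => /andP[].
have Gt1 : G t.+1 = (G t + D m (G t))%N by [].
set b := (h - G t)%N.
pose H : pred 'I_m := fun j => (b <= i j)%N.
pose eL := fun j => if H j then 0 else e j.
have okL : forall j, okE (eL j) by move=> j; rewrite /eL; case: (H j).
have condL : forall j, eL j != 0 -> (maxn K1 (G m) < i j)%N /\ (n0 <= i j)%N.
  by move=> j; rewrite /eL; case: (H j); [rewrite eqxx|exact: cond].
have cardL : (#|[set j | eL j != 0]| <= k)%N.
  rewrite -ltnS; apply: leq_trans card; apply: proper_card; rewrite properE.
  apply/andP; split.
    by apply/subsetP => j; rewrite !inE /eL; case: (H j); rewrite ?eqxx.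
  apply/negP => /subsetP /(_ js jsN); rewrite inE /eL /H.
  by rewrite /b /h leq_subr eqxx.
have lowL : forall j, eL j != 0 -> (i j <= h - G t.+1)%N.
  move=> j; rewrite /eL /H; case: leqP => // ib ej.
  have jZ : j \in Z by rewrite inE ej /= (leq_trans ib) // leq_subr.
  by have := hZ j jZ; rewrite ib andbT -ltnNge => /ltnW.
rewrite (split_S _ e i H) (split_T _ e i H) -/eL.
pose V := \sum_(j | H j) (e j)%:~R * eta ^+ (i j - b).
have TH : Te m e i H = eta ^+ b * V.
  rewrite /Te /V mulr_sumr; apply: eq_bigr => j Hj.
  by rewrite mulrCA -exprD subnKC.
case: (eqVneq V 0) => [V0|V0].
  have T0 : Te m e i H = 0 by rewrite TH V0 mulr0.
  rewrite T0 (zero_transfer _ _ _ _ T0) !add0r.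
  exact: IH.
right.
have Gth : (G t <= h)%N.
  by apply: leq_trans (ltnW Gmh); apply: Gs_mono; exact: ltnW.
have bG : (b + G t)%N = h by rewrite /b subnK.
have htb : forall j, H j -> e j != 0 -> (i j - b <= G t)%N.
  by move=> j _ ej; rewrite leq_subLR bG hmax.
have [g Vg_eq] := @Vg_ex m (G t) e H (fun j => (i j - b)%N) ok htb.
have VV : Vg m (G t) g = V by rewrite Vg_eq.
have dle : delta m (G t) <= `|V| by rewrite /delta -VV; apply: lbF_le; rewrite VV.
have ep : 0 < eta := eta_gt0.
pose X := eta ^+ b.
pose E := eta ^+ G t.
pose W := eta ^+ (h - G t.+1).
pose F := eta ^+ D m (G t).
pose cd := c0n * delta m (G t).
have Xp : 0 < X by apply: exprn_gt0.
have Ep : 0 < E by apply: exprn_gt0.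
have Wp : 0 < W by apply: exprn_gt0.
have cdp : 0 < cd := dpos t.
have c0p : 0 < c0n := c0n_gt0.
have hsplit : eta ^+ h = X * E by rewrite /X /E -exprD bG.
have bsplit : X = W * F.
  rewrite /X /W /F -exprD; congr (_ ^+ _); rewrite /b Gt1.
  rewrite subnDA subnK // leq_subRL // -Gt1.
  by apply: leq_trans GtG (ltnW Gmh).
have THabs : `|Te m e i H| = X * `|V| by rewrite TH normrM ger0_norm // ltW.
have lowH := @lower m e i H h rho r1 hr ok (fun j _ ej => hmax j ej).
have upL := @upper m eL i (h - G t.+1)%N okL lowL.
have Kb := HK1 t (ltnW tm) h K1h.
have Db := DP m (G t).
have Lb := HL0 t (ltnW tm).
have ncS := ncB (Sa m e i H) (Sa m eL i predT).
set sH := nc (Sa m e i H) in lowH ncS.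
set sL := nc (Sa m eL i predT) in upL ncS.
set s := nc (Sa m e i H + Sa m eL i predT) in ncS *.
set Q := m%:R * (B * rho ^+ h) in lowH.
set P := m%:R * (A * eta ^+ (h - G t.+1)) in upL.
have K' : 4 * Q <= cd * X.
  rewrite -/E -/cd hsplit in Kb.
  have e1 : 4 * m%:R * B * E * rho ^+ h = (4 * Q) * E by rewrite /Q; ring.
  have e2 : cd * (X * E) = (cd * X) * E by ring.
  by rewrite e1 e2 ler_pM2r // in Kb.
have D' : 4 * P <= cd * X.
  rewrite -/F -/cd in Db.
  have h1 := ler_wpM2r (ltW Wp) Db.
  have e1 : 4 * m%:R * A * W = 4 * P by rewrite /P -/W; ring.
  have e2 : cd * F * W = cd * X by rewrite bsplit; ring.
  by rewrite -e1 -e2.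
have V' : cd * X <= c0n * (X * `|V|).
  have := ler_wpM2l (ltW (mulr_gt0 c0p Xp)) dle.
  have e1 : c0n * X * delta m (G t) = cd * X by rewrite /cd; ring.
  have e2 : c0n * X * `|V| = c0n * (X * `|V|) by ring.
  by rewrite e1 e2.
rewrite THabs in lowH.
have s1 : cd * X <= 2 * s := num1 _ _ _ _ _ _ _ K' D' V' lowH upL ncS.
have eL0 : 0 <= eta ^+ L0 by apply: exprn_ge0; apply: ltW.
have M1 := ler_wpM2r eL0 s1.
have M2 := ler_wpM2r (ltW Xp) Lb.
have s2 : 2 * X <= s * eta ^+ L0.
  have e1 : cd * X * eta ^+ L0 = (c0n * delta m (G t) * eta ^+ L0) * X by rewrite /cd; ring.
  rewrite e1 -[2 * s * _]mulrA in M1.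
  exact: num2 _ _ _ M2 M1.
have EGm : E <= eta ^+ G m by apply: ler_weXn2l eta_ge1 _ _ _; apply: Gs_mono; apply: ltnW.
have n0le : eta ^+ n0 <= eta ^+ h by apply: ler_weXn2l eta_ge1 _ _ n0h.
have eGm0 : 0 <= eta ^+ G m by apply: exprn_ge0; apply: ltW.
have M3 := ler_wpM2r eGm0 s2.
have M4 := ler_wpM2l (ltW Xp) EGm.
rewrite exprD mulrA.
rewrite hsplit in n0le.
rewrite -mulrA in M3.
apply: (num3 _ _ _ _ n0le M4 _ M3).
by rewrite mulr_ge0 // ltW.
Qed.

End Main.


Lemma bigmin_le (I : eqType) (r : seq I) (F : I -> nat) x0 j :
  j \in r -> (\big[minn/x0]_(k <- r) F k <= F j)%N.
Proof.
elim: r => // a r IH; rewrite inE big_cons => /orP[/eqP->|jr].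
  exact: geq_minl.
exact: leq_trans (geq_minr _ _) (IH jr).
Qed.

Lemma min_idx_le m (i : 'I_m -> nat) j : (min_idx i <= i j)%N.
Proof. by rewrite /min_idx; apply: bigmin_le; rewrite mem_index_enum. Qed.

Lemma sum_succ_homo (f : nat -> nat) :
  {homo (fun m => \sum_(k < m.+1) (f k).+1)%N : a b / (a < b)%N >-> (a < b)%N}.
Proof.
apply: (homo_ltn (r := fun x y => (x < y)%N)); first exact: ltn_trans.
move=> n /=; rewrite [X in (_ < X)%N]big_ord_recr /=.
by rewrite -[X in (X < _)%N]addn0 ltn_add2l.
Qed.

Lemma sum_succ_ge (f : nat -> nat) m : (f m <= \sum_(k < m.+1) (f k).+1)%N.
Proof.
rewrite big_ord_recr /=; apply: leq_trans (leqnSn _) _; exact: leq_addl.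
Qed.

Theorem lemma6p4 (R : realType) (d : nat) (c lam : 'I_d.+1 -> R[i])
  (p : {poly int})
  (Hsize : size p = d.+2)
  (Hirr : irreducible_poly (map_poly (fun z : int => z%:~R : rat) p))
  (Hroots : map_poly (fun z : int => z%:~R : R[i]) p
            = (lead_coef p)%:~R *: \prod_(j < d.+1) ('X - (lam j)%:P))
  (Hreal : complex.Im (lam ord0) = 0)
  (Heta1 : 1 < complex.Re (lam ord0))
  (Hdom : forall j : 'I_d.+1, j != ord0 -> `|lam j| < Complex (complex.Re (lam ord0)) 0)
  (Hc1 : c ord0 != 0)
  (Hpos : forall n : nat, (0 < n)%N ->
            exists k : nat, (0 < k)%N /\ lrs c lam n = k%:R) :
  exists L3 K3 : nat -> nat,
    {homo L3 : a b / (a < b)%N >-> (a < b)%N} /\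
    {homo K3 : a b / (a < b)%N >-> (a < b)%N} /\
    forall (m : nat) (eps : 'I_m -> int) (i : 'I_m -> nat),
      (forall j, eps j = 1 \/ eps j = -1) ->
      (forall j, (K3 m < i j)%N) ->
      (\sum_(j < m) (eps j)%:~R * lrs c lam (i j) = 0 /\
       \sum_(j < m) (eps j)%:~R * complex.Re (lam ord0) ^+ i j = 0 :> R)
      \/
      (Complex (complex.Re (lam ord0) ^ ((min_idx i)%:Z - (L3 m)%:Z)) 0
         <= `|\sum_(j < m) (eps j)%:~R * lrs c lam (i j)|).
Proof.
have C := @core R d c lam p Hirr Hroots Hreal Heta1 Hdom Hc1.
have C' : forall m, exists LK : nat * nat, forall (e : 'I_m -> int) (i : 'I_m -> nat) (n0 : nat),
  (forall j : 'I_m, okE (e j)) ->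
  (forall j : 'I_m, e j != 0 -> (LK.2 < i j)%N /\ (n0 <= i j)%N) ->
  Sa R d c lam m e i predT = 0 /\ Te R d lam m e i predT = 0 \/
  complex.Re (lam ord0) ^+ n0 <=
  nc (Sa R d c lam m e i predT) * complex.Re (lam ord0) ^+ LK.1.
  by move=> m; have [L [K HLK]] := C m; exists (L, K).
pose F m := proj1_sig (constructive_indefinite_description _ (C' m)).
have FP m := proj2_sig (constructive_indefinite_description _ (C' m)).
exists (fun m => \sum_(k < m.+1) ((F k).1).+1)%N, (fun m => \sum_(k < m.+1) ((F k).2).+1)%N.
split; first exact: (sum_succ_homo (fun k => (F k).1)).
split; first exact: (sum_succ_homo (fun k => (F k).2)).
move=> m eps i heps hi.
have ok : forall j, okE (eps j).
  by move=> j; rewrite /okE; case: (heps j) => ->; rewrite eqxx ?orbT.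
have cond : forall j, eps j != 0 -> ((F m).2 < i j)%N /\ (min_idx i <= i j)%N.
  move=> j _; split; last exact: min_idx_le.
  apply: leq_ltn_trans (hi j); exact: (sum_succ_ge (fun k => (F k).2)).
case: (FP m eps i (min_idx i) ok cond) => [[S0 T0]|hb]; [left; split => //|right].
set eta := complex.Re (lam ord0) in hb *.
set S := Sa R d c lam m eps i predT in hb.
have -> : `|\sum_(j < m) (eps j)%:~R * lrs c lam (i j)| = Complex (nc S) 0 by [].
have ep : 0 < eta by apply: lt_trans Heta1.
rewrite lecE /= eqxx /= expfzDr ?gt_eqF // -exprnN -exprnP ler_pdivrMr ?exprn_gt0 //.
apply: le_trans hb _; apply: ler_wpM2l; first exact: nc_ge0.
apply: ler_weXn2l; first exact: ltW.
exact: (sum_succ_ge (fun k => (F k).1)).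
Qed.
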